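(* Let $K$ be a semigroup, $(X,\|\cdot\|)$ a seminormed space, and $U_g:X\to X$ a linear map for each $g\in K$ such that $U_gU_h=U_{gh}$ and $\|U_gx\|\ge\|x\|$ for all $g,h\in K$ and $x\in X$. Suppose that $B_{x_0}:=\{U_gx_0:g\in K\}$ is totally bounded in $(X,\|\cdot\|)$ for some $x_0\in X$. Then for each $\varepsilon>0$ the set \[ E:=\{g\in K:\|U_gx_0-x_0\|<\varepsilon\} \] is relatively dense in $K$.
   Context: A set $E\subset K$ is relatively dense in the semigroup $K$ if there exist $r\in\mathbb{N}$ and $g_1,\dots,g_r\in K$ such that $E\cap\{gg_1,\dots,gg_r\}\neq\varnothing$ for all $g\in K$. A set $B$ is totally bounded in a pseudometric space if for every $\varepsilon>0$ there is a finite set $F$ with every point of $B$ at distance $<\varepsilon$ from some point of $F$. *)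

(* Defs.v *)
From mathcomp Require Import all_boot all_order all_algebra.
Set Implicit Arguments. Unset Strict Implicit. Unset Printing Implicit Defensive.
Import Order.TTheory GRing.Theory Num.Theory.
Local Open Scope ring_scope.

Definition seminorm (F : numFieldType) (X : lmodType F) (nrm : X -> F) : Prop :=
  [/\ forall x, 0 <= nrm x,
      forall (a : F) x, nrm (a *: x) = `|a| * nrm x
    & forall x y, nrm (x + y) <= nrm x + nrm y].

Definition totally_bounded (F : numFieldType) (X : lmodType F) (nrm : X -> F)
    (B : X -> Prop) : Prop :=
  forall eps : F, 0 < eps ->
    exists Fs : seq X, forall b, B b -> exists2 f, f \in Fs & nrm (b - f) < eps.

Definition relatively_dense (K : Type) (mul : K -> K -> K) (E : K -> Prop) : Prop :=
  exists (r : nat) (gs : r.-tuple K),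
    forall g : K, exists i : 'I_r, E (mul g (tnth gs i)).

(* Main.v *)
Require Import Defs.
From mathcomp Require Import all_boot all_order all_algebra.
From mathcomp Require Import zify.
From Stdlib Require Import Classical.
Import Order.TTheory GRing.Theory Num.Theory.
Local Open Scope ring_scope.

Lemma nrm_sym (F : numFieldType) (X : lmodType F) (nrm : X -> F) :
  seminorm nrm -> forall x y, nrm (x - y) = nrm (y - x).
Proof.
case=> _ hZ _ x y.
by rewrite -opprB -(scaleN1r (y - x)) hZ normrN normr1 mul1r.
Qed.

Arguments nrm_sym {F X nrm}.

Lemma sep_bound (F : numFieldType) (X : lmodType F) (nrm : X -> F)
  (hs : seminorm nrm) (eps : F) (he : 0 < eps) (Fs : seq X) :
  forall (T : Type) (phi : T -> X) (s : seq T),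
  pairwise (fun a b => eps <= nrm (phi a - phi b)) s ->
  all (fun a => has (fun f => nrm (phi a - f) < eps / 2%:R) Fs) s ->
  (size s <= size Fs)%N.
Proof.
have hs' := hs; case: hs' => h0 _ hT.
elim: Fs => [|f Fs IH] T phi s Hp Hc.
  by case: s Hp Hc => //= a s _; rewrite andbC.
set p := fun a => nrm (phi a - f) < eps / 2%:R.
rewrite -(count_predC p s) -!size_filter /= -add1n.
apply: leq_add.
  have Hp1 := pairwise_filter p Hp.
  have Hc1 : all p [seq x <- s | p x] by apply: filter_all.
  move: Hp1 Hc1; case: [seq x <- s | p x] => [|a [|b t]] //=.
  rewrite !andbA => /andP[/andP[/andP[Hab _] _] _] /andP[/andP[Ha Hb] _].
  exfalso; move: Hab; apply/negP; rewrite -real_ltNge ?ger0_real ?(ltW he) //.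
  apply: (le_lt_trans (y := nrm (phi a - f) + nrm (f - phi b))).
    by have := hT (phi a - f) (f - phi b); rewrite addrA subrK.
  rewrite (nrm_sym hs f) [X in _ < X](splitr eps).
  by apply: ltrD.
apply: (IH T phi); first exact: (pairwise_filter _ Hp).
rewrite all_filter; apply: sub_all Hc => a /=.
rewrite /p; case: (nrm (phi a - f) < eps / 2%:R) => //=.
Qed.

Arguments sep_bound {F X nrm} hs {eps} he {Fs T} phi {s}.

Theorem proposition5p6 (F : numFieldType) (X : lmodType F) (nrm : X -> F)
  (K : Type) (mul : K -> K -> K) (U : K -> {linear X -> X}) (x0 : X) :
  seminorm nrm ->
  (forall g h k : K, mul g (mul h k) = mul (mul g h) k) ->
  (forall (g h : K) (x : X), U g (U h x) = U (mul g h) x) ->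
  (forall (g : K) (x : X), nrm x <= nrm (U g x)) ->
  totally_bounded nrm (fun y => exists g : K, y = U g x0) ->
  forall eps : F, 0 < eps ->
    relatively_dense mul (fun g => nrm (U g x0 - x0) < eps).
Proof.
move=> hs assoc hU hexp htb eps he.
have he2 : 0 < eps / 2%:R by rewrite divr_gt0 // ltr0n.
have [Fs HFs] := htb _ he2.
have hcov : forall s : seq K,
    all (fun a => has (fun f => nrm (U a x0 - f) < eps / 2%:R) Fs) s.
  elim=> //= a s ->; rewrite andbT.
  have [f Hf Hlt] := HFs (U a x0) (ex_intro _ a erefl).
  by apply/hasP; exists f.
set sep := fun s : seq K => pairwise (fun a b => eps <= nrm (U a x0 - U b x0)) s.
have hbound : forall s, sep s -> (size s <= size Fs)%N.
  move=> s Hs; exact: (sep_bound hs he (fun a => U a x0) Hs (hcov s)).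
have hreal : forall x : F, 0 <= x -> x \is Num.real by move=> x hx; exact: ger0_real.
have nn : forall x, 0 <= nrm x by case: hs.
suff: forall d (s : seq K), sep s -> (size Fs - size s <= d)%N ->
        relatively_dense mul (fun g => nrm (U g x0 - x0) < eps).
  by move=> H; apply: (H (size Fs) [::]) => //; rewrite subn0.
elim=> [|d IH] s Hs Hd.
all: case: (classic (forall g, exists i : 'I_(size s),
     nrm (U (mul g (tnth (in_tuple s) i)) x0 - x0) < eps)) => H;
   first by exists (size s), (in_tuple s).
all: have [g Hg] := not_all_ex_not _ _ H.
all: set s' := g :: map (fun h => mul g (mul g h)) s.
all: have Hs' : sep s'.
1,3: rewrite /sep /s' pairwise_cons pairwise_map all_map; apply/andP; split.
1,3: apply/(@all_tnthP _ _ _ (in_tuple s)) => i /=;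
      set h := tnth (in_tuple s) i;
      (have Hn : ~~ (nrm (U (mul g h) x0 - x0) < eps) by
        apply/negP => Hl; apply: Hg; exists i; exact: Hl);
      (move: Hn; rewrite -real_leNgt;
        [move=> Hn | by apply: hreal; rewrite ltW | by apply: hreal; rewrite nn]);
      apply: (le_trans Hn); apply: (le_trans (hexp g _));
      by rewrite raddfB /= hU (nrm_sym hs).
1,2: apply: sub_pairwise Hs => a b /= Hab;
      apply: (le_trans Hab); apply: (le_trans (hexp g _));
      apply: (le_trans (hexp g _)).
1,2: by rewrite !raddfB /= !hU !assoc.
all: have := hbound _ Hs'; rewrite /s' /= size_map => Hb.
  lia.
apply: (IH s') => //; rewrite /s' /= size_map; lia.
Qed.
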